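(* Let $n\ge 1$ be an integer. Consider the graph consisting of two disjoint copies of the star $K_{1,n}$ together with one additional edge joining their two centres, where one centre is tinted blue, the other centre is tinted red, and all leaves are untinted. The game value of \textsc{Snort} played on this position is $\pm n=\{n\mid -n\}$ if $n$ is even, and $\pm(n* )=\{\,n+* \mid -n+*\,\}$ if $n$ is odd.
   Context: \textsc{Snort} is a two-player normal-play combinatorial game (the player unable to move loses) between Left (blue) and Right (red), played on a finite simple graph in which each vertex may be tinted blue, tinted red, or untinted. Left may move on any vertex not tinted red; Right may move on any vertex not tinted blue. A move on vertex $v$ deletes $v$ and tints all neighbours of $v$ in the mover's colour; any vertex that thereby becomes tinted in both colours is deleted. Game values are in the standard sense of combinatorial game theory: $\{A \mid B\}$ denotes the game with Left options $A$ and Right options $B$, $*=\{0\mid 0\}$, $n*$ denotes the sum $n+*$, and $\pm G$ denotes $\{G\mid -G\}$. $K_{1,n}$ is the star with one centre vertex adjacent to $n$ leaves. *)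

(* Defs.v *)
From mathcomp Require Import all_boot.
Set Implicit Arguments. Unset Strict Implicit. Unset Printing Implicit Defensive.

(** * Short combinatorial games (game trees, not yet quotiented) *)
Inductive game : Type := Game of seq game & seq game.

Definition leftopts (g : game) := let: Game L _ := g in L.
Definition rightopts (g : game) := let: Game _ R := g in R.

Fixpoint gsize (g : game) : nat :=
  let: Game L R := g in (sumn (map gsize L) + sumn (map gsize R)).+1.

(* Defined with fuel; the fuel
   gsize g + gsize h is always sufficient (each recursive call strictly
   decreases the total size). *)
Fixpoint le_fuel (k : nat) (g h : game) : bool :=
  match k with
  | 0 => true
  | k'.+1 =>
      ~~ has (fun gl => le_fuel k' h gl) (leftopts g) &&
      ~~ has (fun hr => le_fuel k' hr g) (rightopts h)
  end.

Definition game_le (g h : game) : bool := le_fuel (gsize g + gsize h) g h.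

Definition game_eq (g h : game) : bool := game_le g h && game_le h g.

Fixpoint game_neg (g : game) : game :=
  let: Game L R := g in Game (map game_neg R) (map game_neg L).

Fixpoint game_add (g h : game) {struct g} : game :=
  let fix addg (h : game) : game :=
    let: Game HL HR := h in
    Game (map (fun gl => game_add gl h) (leftopts g) ++ map addg HL)
         (map (fun gr => game_add gr h) (rightopts g) ++ map addg HR)
  in addg h.

Definition game0 : game := Game [::] [::].
Fixpoint game_nat (n : nat) : game :=
  if n is n'.+1 then Game [:: game_nat n'] [::] else game0.
Definition game_star : game := Game [:: game0] [:: game0].
Definition game_pm (g : game) : game := Game [:: g] [:: game_neg g].

Section Snort.
Variables (T : finType) (e : rel T).

(* A position: the set V of remaining vertices of the fixed simple graph
   (T, e) (the position is the induced subgraph on V), and the sets of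
   blue-tinted and red-tinted vertices. *)
Definition nbhd (V : {set T}) (v : T) : {set T} := [set u in V | e v u].

(* Left moves on v: delete v, tint neighbours blue, delete neighbours that
   were red (now tinted in both colours). *)
Definition left_move (V B Rd : {set T}) (v : T) :=
  (((V :\ v) :\: (nbhd V v :&: Rd)), B :|: nbhd V v, Rd).
Definition right_move (V B Rd : {set T}) (v : T) :=
  (((V :\ v) :\: (nbhd V v :&: B)), B, Rd :|: nbhd V v).

Fixpoint snort_fuel (k : nat) (V B Rd : {set T}) : game :=
  match k with
  | 0 => game0
  | k'.+1 =>
    Game [seq (let: (V', B', R') := left_move V B Rd v in snort_fuel k' V' B' R')
           | v <- enum V & v \notin Rd]
         [seq (let: (V', B', R') := right_move V B Rd v in snort_fuel k' V' B' R')
           | v <- enum V & v \notin B]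
  end.

(* game value of Snort on the position (induced subgraph on V, tints B, Rd);
   fuel #|V| suffices since every move deletes at least one vertex. *)
Definition snort (V B Rd : {set T}) : game := snort_fuel #|V| V B Rd.
End Snort.

(** * The specific position: two copies of K_{1,n} with centres joined.
   Vertices (c, i) with c : bool the copy, i : 'I_n.+1, i = 0 the centre. *)
Definition two_stars_edge (n : nat) : rel (bool * 'I_n.+1) :=
  fun x y =>
    ((x.1 == y.1) && ((val x.2 == 0) != (val y.2 == 0)))
    || ((x.1 != y.1) && (val x.2 == 0) && (val y.2 == 0)).

Arguments two_stars_edge n : clear implicits.

Definition two_stars_value (n : nat) : game :=
  snort (two_stars_edge n) [set: bool * 'I_n.+1]
        [set (true, ord0)] [set (false, ord0)].

(* Main.v *)
Require Import Defs.
From mathcomp Require Import all_boot.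
From Stdlib Require List.
From mathcomp Require Import zify.
Set Implicit Arguments. Unset Strict Implicit. Unset Printing Implicit Defensive.

Lemma hasIn (A : Type) (p : pred A) s :
  reflect (exists2 x, List.In x s & p x) (has p s).
Proof.
elim: s => [|y s IH] /=; first by right; case.
case py: (p y); first by left; exists y => //; left.
apply: (iffP IH) => [[x hx px]|[x [<-|hx] px]].
- by exists x => //; right.
- by rewrite py in px.
- by exists x.
Qed.

Lemma In_map (A B : Type) (f : A -> B) s y :
  List.In y (map f s) <-> exists2 x, List.In x s & y = f x.
Proof.
elim: s y => [|x s IH] y /=; first by split => // -[].
split.
- case=> [<-|h]; first by exists x => //; left.
  by case/IH: h => z hz ->; exists z => //; right.
- case=> z [<-|hz] ->; first by left.
  by right; apply/IH; exists z.
Qed.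

Lemma In_cat (A : Type) (s t : seq A) x : List.In x (s ++ t) <-> List.In x s \/ List.In x t.
Proof. exact: List.in_app_iff. Qed.

Lemma In_mem (T : eqType) (x : T) s : List.In x s <-> x \in s.
Proof.
elim: s => [|y s IH] //=; rewrite in_cons.
split => [[->|/IH->]|/orP[/eqP->|/IH]]; rewrite ?eqxx ?orbT //; by [left | right].
Qed.

Lemma gsize_gt0 g : 0 < gsize g. Proof. by case: g. Qed.

Lemma sumn_In s x : List.In x s -> gsize x <= sumn (map gsize s).
Proof.
elim: s => [|y s IH] //= [->|/IH h]; first exact: leq_addr.
by apply: leq_trans h (leq_addl _ _).
Qed.

Lemma gsizeL L R x : List.In x L -> gsize x < gsize (Game L R).
Proof. move=> h /=; rewrite ltnS; apply: leq_trans (sumn_In h) (leq_addr _ _). Qed.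
Lemma gsizeR L R x : List.In x R -> gsize x < gsize (Game L R).
Proof. move=> h /=; rewrite ltnS; apply: leq_trans (sumn_In h) (leq_addl _ _). Qed.

Lemma gsize_lo g x : List.In x (leftopts g) -> gsize x < gsize g.
Proof. case: g => L R; exact: gsizeL. Qed.
Lemma gsize_ro g x : List.In x (rightopts g) -> gsize x < gsize g.
Proof. case: g => L R; exact: gsizeR. Qed.

Lemma eq_In_has (A : Type) (p q : pred A) s :
  (forall x, List.In x s -> p x = q x) -> has p s = has q s.
Proof.
elim: s => [|y s IH] //= h; rewrite h; last by left.
by rewrite IH // => x hx; apply: h; right.
Qed.

Lemma le_fuel_mono k k' g h :
  gsize g + gsize h <= k -> k <= k' -> le_fuel k g h = le_fuel k' g h.
Proof.
elim: k k' g h => [|k IH] [|k'] g h //=.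
- by rewrite leqn0 addn_eq0 (negbTE (lt0n_neq0 (gsize_gt0 g))).
- move=> hs hk; congr (~~ _ && ~~ _); apply: eq_In_has => x hx; apply: IH => //.
  + have := gsize_lo hx; lia.
  + have := gsize_ro hx; lia.
Qed.

Lemma game_leE g h : game_le g h =
  ~~ has (fun gl => game_le h gl) (leftopts g) &&
  ~~ has (fun hr => game_le hr g) (rightopts h).
Proof.
rewrite /game_le; case: g => L R.
have hL := @gsizeL L R; have hR := @gsizeR L R.
have hs := gsize_gt0 (Game L R).
move Es: (gsize (Game L R)) hL hR hs => s hL hR hs.
have -> : s + gsize h = (s + gsize h).-1.+1 by lia.
rewrite [le_fuel _ _ _]/=; congr (~~ _ && ~~ _); apply: eq_In_has => x hx; symmetry; apply: le_fuel_mono => //.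
all: first [by have := hL _ hx; lia | by have := gsize_ro hx; lia | done].
Qed.

Notation "g <=G h" := (game_le g h) (at level 70).
Notation "g ==G h" := (game_eq g h) (at level 70).
Notation In := List.In.

Lemma leI g h : (forall gl, In gl (leftopts g) -> ~~ (h <=G gl)) ->
  (forall hr, In hr (rightopts h) -> ~~ (hr <=G g)) -> g <=G h.
Proof.
move=> h1 h2; rewrite game_leE; apply/andP; split; apply/hasIn => -[x hx];
  [by rewrite (negbTE (h1 _ hx)) | by rewrite (negbTE (h2 _ hx))].
Qed.

Lemma leL g h gl : g <=G h -> In gl (leftopts g) -> ~~ (h <=G gl).
Proof. by rewrite game_leE => /andP[/hasIn h1 _] hx; apply/negP => hh; apply: h1; exists gl. Qed.
Lemma leR g h hr : g <=G h -> In hr (rightopts h) -> ~~ (hr <=G g).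
Proof. by rewrite game_leE => /andP[_ /hasIn h1] hx; apply/negP => hh; apply: h1; exists hr. Qed.

Lemma nleE g h : ~~ (g <=G h) ->
  (exists2 gl, In gl (leftopts g) & h <=G gl) \/ (exists2 hr, In hr (rightopts h) & hr <=G g).
Proof.
rewrite game_leE negb_and !negbK => /orP[/hasIn h1|/hasIn h1]; by [left | right].
Qed.

Lemma le_refl g : g <=G g.
Proof.
move: {2}(gsize g) (leqnn (gsize g)) => k; elim: k g => [|k IH] g hg.
  by have := gsize_gt0 g; lia.
apply: leI => [gl hgl|gr hgr]; apply/negP => h.
- have := leL h hgl; rewrite IH //; have := gsize_lo hgl; lia.
- have := leR h hgr; rewrite IH //; have := gsize_ro hgr; lia.
Qed.

Lemma lfL g gl : In gl (leftopts g) -> ~~ (g <=G gl).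
Proof. by move=> hx; apply/negP => h; have := leL h hx; rewrite le_refl. Qed.
Lemma lfR g gr : In gr (rightopts g) -> ~~ (gr <=G g).
Proof. by move=> hx; apply/negP => h; have := leR h hx; rewrite le_refl. Qed.

Lemma le_trans g h k : g <=G h -> h <=G k -> g <=G k.
Proof.
move: {2}(gsize g + gsize h + gsize k) (leqnn (gsize g + gsize h + gsize k)) => n.
elim: n g h k => [|n IH] g h k hs.
  by have := gsize_gt0 g; lia.
move=> gh hk; apply: leI => [gl hgl|kr hkr]; apply/negP => H.
- have : h <=G gl by apply: (IH h k gl) => //; have := gsize_lo hgl; lia.
  by rewrite (negbTE (leL gh hgl)).
- have : kr <=G h by apply: (IH kr g h) => //; have := gsize_ro hkr; lia.
  by rewrite (negbTE (leR hk hkr)).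
Qed.

Lemma eq_refl g : g ==G g. Proof. by rewrite /game_eq le_refl. Qed.
Lemma eq_sym g h : g ==G h -> h ==G g. Proof. by rewrite /game_eq andbC. Qed.
Lemma eq_trans g h k : g ==G h -> h ==G k -> g ==G k.
Proof.
by case/andP=> a b /andP[c d]; apply/andP; split; [apply: le_trans a c | apply: le_trans d b].
Qed.
Lemma eq_le g h : g ==G h -> g <=G h. Proof. by case/andP. Qed.
Lemma eq_ge g h : g ==G h -> h <=G g. Proof. by case/andP. Qed.

Definition matchL (s t : seq game) :=
  (forall x, In x s -> exists2 y, In y t & x ==G y) /\
  (forall y, In y t -> exists2 x, In x s & x ==G y).

Lemma eq_opts g h : matchL (leftopts g) (leftopts h) ->
  matchL (rightopts g) (rightopts h) -> g ==G h.
Proof.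
move=> [l1 l2] [r1 r2]; apply/andP; split; apply: leI.
- move=> gl /l1 [y hy e]; apply/negP => H.
  by have := lfL hy; rewrite (le_trans H (eq_le e)).
- move=> hr /r2 [x hx e]; apply/negP => H.
  by have := lfR hx; rewrite (le_trans (eq_le e) H).
- move=> hl /l2 [x hx e]; apply/negP => H.
  by have := lfL hx; rewrite (le_trans H (eq_ge e)).
- move=> gr /r1 [y hy e]; apply/negP => H.
  by have := lfR hy; rewrite (le_trans (eq_ge e) H).
Qed.

Lemma game_ind' (P : game -> Prop) :
  (forall L R, (forall x, In x L -> P x) -> (forall x, In x R -> P x) -> P (Game L R)) ->
  forall g, P g.
Proof.
move=> H g; move: {2}(gsize g) (leqnn (gsize g)) => k; elim: k g => [|k IH] g hg.
  by have := gsize_gt0 g; lia.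
case: g hg => L R hg; apply: H => x hx; apply: IH.
- by have := gsizeL R hx; lia.
- by have := gsizeR L hx; lia.
Qed.

Lemma eq_map_In (A B : Type) (f g : A -> B) s :
  (forall x, In x s -> f x = g x) -> map f s = map g s.
Proof.
elim: s => [|y s IH] //= h; rewrite h; last by left.
by rewrite IH // => x hx; apply: h; right.
Qed.

Lemma map_In_id (A : Type) (f : A -> A) s :
  (forall x, In x s -> f x = x) -> map f s = s.
Proof. by move=> h; rewrite (eq_map_In (g := id) h) map_id. Qed.

Lemma negE g : game_neg g = Game (map game_neg (rightopts g)) (map game_neg (leftopts g)).
Proof. by case: g. Qed.

Lemma negK g : game_neg (game_neg g) = g.
Proof.
elim/game_ind': g => L R hL hR /=; rewrite -!map_comp.
by rewrite !map_In_id.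
Qed.

Lemma neg_le g h : (game_neg h <=G game_neg g) = (g <=G h).
Proof.
move: {2}(gsize g + gsize h) (leqnn (gsize g + gsize h)) => k.
elim: k g h => [|k IH] g h hs; first by have := gsize_gt0 g; lia.
rewrite game_leE [g <=G h]game_leE andbC (negE h) (negE g) /= !has_map.
congr (~~ _ && ~~ _); apply: eq_In_has => x hx /=; rewrite -?(negE h) -?(negE g) IH //.
- by have := gsize_lo hx; lia.
- by have := gsize_ro hx; lia.
Qed.

Lemma neg_eq g h : g ==G h -> game_neg g ==G game_neg h.
Proof. by rewrite /game_eq !neg_le andbC. Qed.

Lemma neg_game0 : game_neg game0 = game0. Proof. by []. Qed.

Lemma addE g h : game_add g h =
  Game (map (fun gl => game_add gl h) (leftopts g) ++ map (game_add g) (leftopts h))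
       (map (fun gr => game_add gr h) (rightopts g) ++ map (game_add g) (rightopts h)).
Proof. by case: g => GL GR; case: h. Qed.

Lemma addL g h : leftopts (game_add g h) =
  map (fun gl => game_add gl h) (leftopts g) ++ map (game_add g) (leftopts h).
Proof. by rewrite addE. Qed.
Lemma addR g h : rightopts (game_add g h) =
  map (fun gr => game_add gr h) (rightopts g) ++ map (game_add g) (rightopts h).
Proof. by rewrite addE. Qed.

Lemma add0 g : game_add g game0 = g.
Proof.
elim/game_ind': g => L R hL hR; rewrite addE /= !cats0.
by rewrite !map_In_id.
Qed.

Lemma add0l g : game_add game0 g = g.
Proof.
elim/game_ind': g => L R hL hR; rewrite addE /=.
by rewrite !map_In_id.
Qed.

Lemma neg_add g h : game_neg (game_add g h) = game_add (game_neg g) (game_neg h).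
Proof.
move: {2}(gsize g + gsize h) (leqnn (gsize g + gsize h)) => k.
elim: k g h => [|k IH] g h hs; first by have := gsize_gt0 g; lia.
rewrite addE [game_add (game_neg g) _]addE /= (negE g) (negE h) /= !map_cat -!map_comp.
congr (Game (_ ++ _) (_ ++ _)); apply: eq_map_In => x hx /=; rewrite IH ?negE //.
- by have := gsize_ro hx; lia.
- by have := gsize_ro hx; lia.
- by have := gsize_lo hx; lia.
- by have := gsize_lo hx; lia.
Qed.

Notation "g +G h" := (game_add g h) (at level 50, left associativity).

Lemma In_addL g h x : In x (leftopts (g +G h)) <->
  (exists2 gl, In gl (leftopts g) & x = gl +G h) \/ (exists2 hl, In hl (leftopts h) & x = g +G hl).
Proof. by rewrite addL In_cat !In_map. Qed.
Lemma In_addR g h x : In x (rightopts (g +G h)) <->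
  (exists2 gl, In gl (rightopts g) & x = gl +G h) \/ (exists2 hl, In hl (rightopts h) & x = g +G hl).
Proof. by rewrite addR In_cat !In_map. Qed.

Lemma In_addL1 g h gl : In gl (leftopts g) -> In (gl +G h) (leftopts (g +G h)).
Proof. by move=> hx; apply/In_addL; left; exists gl. Qed.
Lemma In_addL2 g h hl : In hl (leftopts h) -> In (g +G hl) (leftopts (g +G h)).
Proof. by move=> hx; apply/In_addL; right; exists hl. Qed.
Lemma In_addR1 g h gl : In gl (rightopts g) -> In (gl +G h) (rightopts (g +G h)).
Proof. by move=> hx; apply/In_addR; left; exists gl. Qed.
Lemma In_addR2 g h hl : In hl (rightopts h) -> In (g +G hl) (rightopts (g +G h)).
Proof. by move=> hx; apply/In_addR; right; exists hl. Qed.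

Lemma add_le_l g h k : g <=G h -> g +G k <=G h +G k.
Proof.
move: {2}(gsize g + gsize h + gsize k) (leqnn (gsize g + gsize h + gsize k)) => n.
elim: n g h k => [|n IH] g h k hs; first by have := gsize_gt0 g; lia.
move=> gh; apply: leI => [x|x].
- case/In_addL => [[gl hgl ->]|[kl hkl ->]]; apply/negP => H.
  + case/nleE: (leL gh hgl) => [[hl hhl glhl]|[glr hglr glrh]].
    * have : gl +G k <=G hl +G k by apply: IH => //; have := gsize_lo hgl; have := gsize_lo hhl; lia.
      move/(le_trans H); apply/negP; exact: lfL (In_addL1 _ hhl).
    * have : glr +G k <=G h +G k by apply: IH => //; have := gsize_lo hgl; have := gsize_ro hglr; lia.
      move/le_trans/(_ H); apply/negP; exact: lfR (In_addR1 _ hglr).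
  + have : g +G kl <=G h +G kl by apply: IH => //; have := gsize_lo hkl; lia.
    move/(le_trans H); apply/negP; exact: lfL (In_addL2 _ hkl).
- case/In_addR => [[hr hhr ->]|[kr hkr ->]]; apply/negP => H.
  + case/nleE: (leR gh hhr) => [[hrl hhrl ghrl]|[gr hgr grhr]].
    * have : g +G k <=G hrl +G k by apply: IH => //; have := gsize_ro hhr; have := gsize_lo hhrl; lia.
      move/(le_trans H); apply/negP; exact: lfL (In_addL1 _ hhrl).
    * have : gr +G k <=G hr +G k by apply: IH => //; have := gsize_ro hhr; have := gsize_ro hgr; lia.
      move/le_trans/(_ H); apply/negP; exact: lfR (In_addR1 _ hgr).
  + have : g +G kr <=G h +G kr by apply: IH => //; have := gsize_ro hkr; lia.
    move/le_trans/(_ H); apply/negP; exact: lfR (In_addR2 _ hkr).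
Qed.

Lemma add_comm g h : g +G h ==G h +G g.
Proof.
move: {2}(gsize g + gsize h) (leqnn (gsize g + gsize h)) => n.
elim: n g h => [|n IH] g h hs; first by have := gsize_gt0 g; lia.
apply: eq_opts; split.
- move=> x /In_addL [[gl hgl ->]|[hl hhl ->]].
  + exists (h +G gl); first exact: In_addL2.
    by apply: IH; have := gsize_lo hgl; lia.
  + exists (hl +G g); first exact: In_addL1.
    by apply: IH; have := gsize_lo hhl; lia.
- move=> x /In_addL [[hl hhl ->]|[gl hgl ->]].
  + exists (g +G hl); first exact: In_addL2.
    by apply: IH; have := gsize_lo hhl; lia.
  + exists (gl +G h); first exact: In_addL1.
    by apply: IH; have := gsize_lo hgl; lia.
- move=> x /In_addR [[gl hgl ->]|[hl hhl ->]].
  + exists (h +G gl); first exact: In_addR2.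
    by apply: IH; have := gsize_ro hgl; lia.
  + exists (hl +G g); first exact: In_addR1.
    by apply: IH; have := gsize_ro hhl; lia.
- move=> x /In_addR [[hl hhl ->]|[gl hgl ->]].
  + exists (g +G hl); first exact: In_addR2.
    by apply: IH; have := gsize_ro hhl; lia.
  + exists (gl +G h); first exact: In_addR1.
    by apply: IH; have := gsize_ro hgl; lia.
Qed.

Lemma add_le_r g h k : g <=G h -> k +G g <=G k +G h.
Proof.
move=> gh; apply: le_trans (eq_le (add_comm _ _)) _.
apply: le_trans (eq_le (add_comm _ _)); exact: add_le_l.
Qed.

Lemma add_eq_l g h k : g ==G h -> g +G k ==G h +G k.
Proof. by case/andP=> a b; apply/andP; split; apply: add_le_l. Qed.
Lemma add_eq_r g h k : g ==G h -> k +G g ==G k +G h.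
Proof. by case/andP=> a b; apply/andP; split; apply: add_le_r. Qed.
Lemma add_eq g h g' h' : g ==G g' -> h ==G h' -> g +G h ==G g' +G h'.
Proof. by move=> a b; apply: eq_trans (add_eq_l _ a) (add_eq_r _ b). Qed.

Lemma add_assoc g h k : (g +G h) +G k ==G g +G (h +G k).
Proof.
move: {2}(gsize g + gsize h + gsize k) (leqnn (gsize g + gsize h + gsize k)) => n.
elim: n g h k => [|n IH] g h k hs; first by have := gsize_gt0 g; lia.
apply: eq_opts; split.
- move=> x /In_addL [[y /In_addL [[gl hgl ->]|[hl hhl ->]] ->]|[kl hkl ->]].
  + exists (gl +G (h +G k)); first exact: In_addL1.
    by apply: IH; have := gsize_lo hgl; lia.
  + exists (g +G (hl +G k)); first by apply: In_addL2; apply: In_addL1.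
    by apply: IH; have := gsize_lo hhl; lia.
  + exists (g +G (h +G kl)); first by apply: In_addL2; apply: In_addL2.
    by apply: IH; have := gsize_lo hkl; lia.
- move=> x /In_addL [[gl hgl ->]|[y /In_addL [[hl hhl ->]|[kl hkl ->]] ->]].
  + exists ((gl +G h) +G k); first by apply: In_addL1; apply: In_addL1.
    by apply: IH; have := gsize_lo hgl; lia.
  + exists ((g +G hl) +G k); first by apply: In_addL1; apply: In_addL2.
    by apply: IH; have := gsize_lo hhl; lia.
  + exists ((g +G h) +G kl); first by apply: In_addL2.
    by apply: IH; have := gsize_lo hkl; lia.
- move=> x /In_addR [[y /In_addR [[gl hgl ->]|[hl hhl ->]] ->]|[kl hkl ->]].
  + exists (gl +G (h +G k)); first exact: In_addR1.
    by apply: IH; have := gsize_ro hgl; lia.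
  + exists (g +G (hl +G k)); first by apply: In_addR2; apply: In_addR1.
    by apply: IH; have := gsize_ro hhl; lia.
  + exists (g +G (h +G kl)); first by apply: In_addR2; apply: In_addR2.
    by apply: IH; have := gsize_ro hkl; lia.
- move=> x /In_addR [[gl hgl ->]|[y /In_addR [[hl hhl ->]|[kl hkl ->]] ->]].
  + exists ((gl +G h) +G k); first by apply: In_addR1; apply: In_addR1.
    by apply: IH; have := gsize_ro hgl; lia.
  + exists ((g +G hl) +G k); first by apply: In_addR1; apply: In_addR2.
    by apply: IH; have := gsize_ro hhl; lia.
  + exists ((g +G h) +G kl); first by apply: In_addR2.
    by apply: IH; have := gsize_ro hkl; lia.
Qed.

Lemma add_left_comm x a y : x +G (a +G y) ==G a +G (x +G y).
Proof.
apply: eq_trans (eq_sym (add_assoc _ _ _)) _.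
apply: eq_trans (add_eq_l _ (add_comm _ _)) _.
exact: add_assoc.
Qed.

Lemma zero_le_nat m : game0 <=G game_nat m.
Proof. by apply: leI => x; case: m. Qed.

Lemma natR k : rightopts (game_nat k) = [::]. Proof. by case: k. Qed.

Lemma nat_add a b : game_nat a +G game_nat b ==G game_nat (a + b).
Proof.
move: {2}(a + b) (leqnn (a + b)) => n.
elim: n a b => [|n IH] a b hs.
  have ha : a = 0 by lia.
  have hb : b = 0 by lia.
  by subst; rewrite eq_refl.
apply: eq_opts; last by rewrite addR !natR; split => x.
split.
- move=> x /In_addL [[y hy ->]|[y hy ->]].
  + case: a hy hs => [//|a] /= [<-|//] hs.
    exists (game_nat (a + b)); first by rewrite ?addSn /=; left.
    by apply: IH; lia.
  + case: b hy hs => [//|b] /= [<-|//] hs.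
    exists (game_nat (a + b)); first by rewrite ?addnS /=; left.
    by apply: IH; lia.
- case: a hs => [|a] hs x.
  + rewrite add0n => hx; case: b hx hs => [//|b] hx hs; case: hx => [<-|//].
    exists (game0 +G game_nat b); first by apply: In_addL2; left.
    by rewrite add0l eq_refl.
  + rewrite addSn => -[<-|//].
    exists (game_nat a +G game_nat b); first by apply: In_addL1; left.
    by apply: IH; lia.
Qed.

Lemma star_star : game_star +G game_star ==G game0.
Proof.
apply/andP; split; apply: leI => x //=.
- case=> [<-|[<-|//]]; apply/negP => /leR/(_ (or_introl erefl)); by rewrite le_refl.
- case=> [<-|[<-|//]]; apply/negP => /leL/(_ (or_introl erefl)); by rewrite le_refl.
Qed.

Lemma neg_star : game_neg game_star = game_star. Proof. by []. Qed.

Lemma star_le_nat m : game_star <=G game_nat m.+1.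
Proof.
apply: leI => x //= [<-|//]; apply/negP => /leL/(_ (or_introl erefl)).
by rewrite zero_le_nat.
Qed.

Lemma not_natstar_le_nat a : ~~ (game_nat a +G game_star <=G game_nat a).
Proof.
have h : In (game_nat a +G game0) (leftopts (game_nat a +G game_star)).
  by apply: In_addL2; left.
by have := lfL h; rewrite add0.
Qed.

Lemma pm_notle H Y : Y <=G H -> ~~ (game_pm H <=G Y).
Proof.
move=> yh; apply/negP => /le_trans/(_ yh); apply/negP; apply: lfL; by left.
Qed.

Definition starp (c : nat) := if odd c then game_star else game0.
Definition gval a b c := game_nat a +G (game_neg (game_nat b) +G starp c).

Lemma val1 a b c : game_nat 1 +G gval a b c ==G gval a.+1 b c.
Proof.
apply: eq_trans (eq_sym (add_assoc _ _ _)) _; apply: add_eq_l.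
by rewrite -add1n; apply: nat_add.
Qed.

Lemma valm1 a b c : game_neg (game_nat 1) +G gval a b c ==G gval a b.+1 c.
Proof.
apply: eq_trans (add_left_comm _ _ _) _; apply: add_eq_r.
apply: eq_trans (eq_sym (add_assoc _ _ _)) _; apply: add_eq_l.
rewrite -neg_add -add1n; apply: neg_eq; exact: nat_add.
Qed.

Lemma valstar a b c : game_star +G gval a b c ==G gval a b c.+1.
Proof.
apply: eq_trans (add_left_comm _ _ _) _; apply: add_eq_r.
apply: eq_trans (add_left_comm _ _ _) _; apply: add_eq_r.
rewrite /starp /=; case: (odd c) => /=; first exact: star_star.
exact: eq_refl.
Qed.

Definition H0 n := if odd n then game_nat n +G game_star else game_nat n.

Lemma valH0 n : gval n 0 n = H0 n.
Proof.
rewrite /gval /H0 /starp; have -> : game_neg (game_nat 0) = game0 by [].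
by rewrite add0l; case: (odd n); rewrite ?add0.
Qed.

Lemma negnatL k : leftopts (game_neg (game_nat k)) = [::].
Proof. by case: k. Qed.

Lemma valB n : 0 < n -> gval 0 n n.-1 <=G game_pm (H0 n).
Proof.
move=> n0; have [hn|hn] := boolP (odd n).
- have e1 : H0 n = game_nat n +G game_star by rewrite /H0 hn.
  have e2 : starp n.-1 = game0 by rewrite /starp; case: n n0 hn {e1} => //= m _ /negbTE ->.
  rewrite /gval e1 e2 add0l add0; apply: leI => x; first by rewrite negnatL.
  case=> [<-|//]; rewrite neg_add neg_star.
  have h : In (game_neg (game_nat n) +G game0) (leftopts (game_neg (game_nat n) +G game_star)).
    by apply: In_addL2; left.
  by have := lfL h; rewrite add0.
- have e1 : H0 n = game_nat n by rewrite /H0 (negbTE hn).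
  have e2 : starp n.-1 = game_star.
    by rewrite /starp; case: n n0 hn {e1} => //= m _ /negPn ->.
  rewrite /gval e1 e2 add0l; apply: leI => x.
  + move/In_addL => [[y hy ->]|[y hy ->]]; first by move: hy; rewrite negnatL.
    case: hy => [<-|//]; rewrite add0; apply: pm_notle.
    apply: le_trans (zero_le_nat _); rewrite -neg_game0 neg_le; exact: zero_le_nat.
  + case=> [<-|//]; apply/negP => H.
    have h : In (game_neg (game_nat n) +G game0) (rightopts (game_neg (game_nat n) +G game_star)).
      by apply: In_addR2; left.
    by have := lfR h; rewrite add0 H.
Qed.

Section SnortTh.
Variables (T : finType) (e : rel T).

Definition lpos (V B R : {set T}) v := ((V :\ v) :\: (nbhd e V v :&: R)).
Definition lopt (V B R : {set T}) v :=
  snort e (lpos V B R v) (B :|: nbhd e V v) R.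
Definition ropt (V B R : {set T}) v :=
  snort e (lpos V R B v) B (R :|: nbhd e V v).

Lemma lpos_card (V B R : {set T}) v : v \in V -> #|lpos V B R v| < #|V|.
Proof.
move=> hv; apply: (@leq_ltn_trans #|V :\ v|); last exact: proper_card (properD1 hv).
exact: subset_leq_card (subsetDl _ _).
Qed.

Lemma snort_fuel_eq k k' (V B R : {set T}) : #|V| <= k -> #|V| <= k' ->
  snort_fuel e k V B R = snort_fuel e k' V B R.
Proof.
elim: k k' V B R => [|k IH] k' V B R hk hk'.
  move: hk; rewrite leqn0 => /eqP/cards0_eq ->.
  by case: k' {hk'} => //=; rewrite enum_set0.
case: k' hk' => [|k'] hk'.
  by move: hk'; rewrite leqn0 => /eqP/cards0_eq -> /=; rewrite enum_set0.
rewrite /=; congr Game; apply/eq_in_map => v; rewrite mem_filter mem_enum => /andP[_ hv];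
  apply: IH; have := @lpos_card V B R v hv; have := @lpos_card V R B v hv; rewrite /lpos; lia.
Qed.

Lemma snortE (V B R : {set T}) : snort e V B R =
  Game [seq lopt V B R v | v <- enum V & v \notin R]
       [seq ropt V B R v | v <- enum V & v \notin B].
Proof.
rewrite /snort; case hV: #|V| => [|k].
  by move/cards0_eq: hV => ->; rewrite enum_set0.
rewrite /=; congr Game; apply/eq_in_map => v; rewrite mem_filter mem_enum => /andP[_ hv];
  rewrite /lopt /ropt /snort; apply: snort_fuel_eq => //;
  have := @lpos_card V B R v hv; have := @lpos_card V R B v hv; rewrite /lpos hV; lia.
Qed.

Lemma In_snortL (V B R : {set T}) x : In x (leftopts (snort e V B R)) <->
  exists2 v, (v \in V) && (v \notin R) & x = lopt V B R v.
Proof.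
rewrite snortE /= In_map; split => -[v hv ->]; exists v => //.
- by move/In_mem: hv; rewrite mem_filter mem_enum andbC.
- by apply/In_mem; rewrite mem_filter mem_enum andbC.
Qed.

Lemma In_snortR (V B R : {set T}) x : In x (rightopts (snort e V B R)) <->
  exists2 v, (v \in V) && (v \notin B) & x = ropt V B R v.
Proof.
rewrite snortE /= In_map; split => -[v hv ->]; exists v => //.
- by move/In_mem: hv; rewrite mem_filter mem_enum andbC.
- by apply/In_mem; rewrite mem_filter mem_enum andbC.
Qed.

Lemma snort_swap (V B R : {set T}) : snort e V R B = game_neg (snort e V B R).
Proof.
move: {2}#|V| (leqnn #|V|) => k; elim: k V B R => [|k IH] V B R hk.
  by move: hk; rewrite leqn0 => /eqP/cards0_eq ->; rewrite !snortE enum_set0.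
rewrite (snortE V R B) (snortE V B R) /= -!map_comp; congr Game; apply/eq_in_map => v;
  rewrite mem_filter mem_enum => /andP[_ hv] /=; rewrite /lopt /ropt.
- by rewrite IH //; have := @lpos_card V R B v hv; lia.
- by apply: IH; have := @lpos_card V B R v hv; lia.
Qed.

Lemma snort_ext (V B R B' R' : {set T}) :
  (forall x, x \in V -> (x \in B) = (x \in B')) ->
  (forall x, x \in V -> (x \in R) = (x \in R')) ->
  snort e V B R = snort e V B' R'.
Proof.
move: {2}#|V| (leqnn #|V|) => k; elim: k V B R B' R' => [|k IH] V B R B' R' hk hB hR.
  by move: hk; rewrite leqn0 => /eqP/cards0_eq ->; rewrite !snortE enum_set0.
have hN : forall v (X X' : {set T}), (forall x, x \in V -> (x \in X) = (x \in X')) -> nbhd e V v :&: X = nbhd e V v :&: X'.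
  move=> v X X' hX; apply/setP => x; rewrite !inE.
  by case hx: (x \in V) => //=; rewrite hX.
rewrite !snortE; congr Game.
- rewrite (@eq_in_filter _ _ (fun v => v \notin R')); last by move=> v; rewrite mem_enum => hv; rewrite hR.
  apply/eq_in_map => v; rewrite mem_filter mem_enum => /andP[_ hv].
  rewrite /lopt /lpos (hN v R R') //; apply: IH.
  + by have := @lpos_card V B R' v hv; rewrite /lpos; lia.
  + move=> x; rewrite !inE => /andP[_ /andP[_ hx]]; by rewrite hB.
  + move=> x; rewrite !inE => /andP[_ /andP[_ hx]]; by rewrite hR.
- rewrite (@eq_in_filter _ _ (fun v => v \notin B')); last by move=> v; rewrite mem_enum => hv; rewrite hB.
  apply/eq_in_map => v; rewrite mem_filter mem_enum => /andP[_ hv].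
  rewrite /ropt /lpos (hN v B B') //; apply: IH.
  + by have := @lpos_card V R B' v hv; rewrite /lpos; lia.
  + move=> x; rewrite !inE => /andP[_ /andP[_ hx]]; by rewrite hB.
  + move=> x; rewrite !inE => /andP[_ /andP[_ hx]]; by rewrite hR.
Qed.

End SnortTh.

Section Split.
Variables (T : finType) (e : rel T).

Lemma ropt_lopt (V B R : {set T}) v : ropt e V B R v = game_neg (lopt e V R B v).
Proof. by rewrite /ropt /lopt -snort_swap. Qed.

Definition disj (V1 V2 : {set T}) := forall x, x \in V1 -> x \notin V2.
Definition noedge (V1 V2 : {set T}) := forall x y, x \in V1 -> y \in V2 -> ~~ e x y && ~~ e y x.

Lemma disjC V1 V2 : disj V1 V2 -> disj V2 V1.
Proof. by move=> h x hx; apply/negP => /h; rewrite hx. Qed.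
Lemma noedgeC V1 V2 : noedge V1 V2 -> noedge V2 V1.
Proof. by move=> h x y hx hy; rewrite andbC; apply: h. Qed.

Lemma snort_split_aux k (V1 V2 B R : {set T}) :
  #|V1 :|: V2| <= k -> disj V1 V2 -> noedge V1 V2 ->
  snort e (V1 :|: V2) B R ==G snort e V1 B R +G snort e V2 B R.
Proof.
elim: k V1 V2 B R => [|k IH] V1 V2 B R hk hd hn.
  have c1 := subset_leq_card (subsetUl V1 V2).
  have c2 := subset_leq_card (subsetUr V1 V2).
  have h1 : V1 = set0 by apply: cards0_eq; lia.
  have h2 : V2 = set0 by apply: cards0_eq; lia.
  by rewrite h1 h2 setU0 !snortE enum_set0 /= eq_refl.
have help : forall (W1 W2 B R : {set T}) v, disj W1 W2 -> noedge W1 W2 ->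
    #|W1 :|: W2| <= k.+1 -> v \in W1 ->
    lopt e (W1 :|: W2) B R v ==G lopt e W1 B R v +G snort e W2 B R.
  move=> W1 W2 B' R' v d n hk' hv.
  have hN : nbhd e (W1 :|: W2) v = nbhd e W1 v.
    apply/setP => u; rewrite !inE; case hu2: (u \in W2); last by rewrite orbF.
    by have /andP[/negbTE -> _] := n _ _ hv hu2; rewrite !andbF.
  have hP : lpos e (W1 :|: W2) B' R' v = lpos e W1 B' R' v :|: W2.
    apply/setP => u; rewrite /lpos hN !inE; case hu2: (u \in W2); last by rewrite !orbF.
    have hu1 : u \in W1 = false by apply/negbTE; apply/negP => /d; rewrite hu2.
    have -> : u != v by apply/negP => /eqP Euv; move: hv; rewrite -Euv hu1.
    have -> : e v u = false by have /andP[/negbTE -> _] := n _ _ hv hu2.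
    by rewrite !andbF orbT.
  rewrite /lopt hP hN; apply: eq_trans (IH _ _ _ _ _ _ _) _.
  - rewrite -hP; have := @lpos_card T e (W1 :|: W2) B' R' v; rewrite inE hv => /(_ isT); lia.
  - by move=> x; rewrite /lpos !inE => /andP[_ /andP[_ /d]].
  - by move=> x y; rewrite /lpos !inE => /andP[_ /andP[_ /n]] H /H.
  - apply: add_eq_r; rewrite (@snort_ext _ e W2 (B' :|: nbhd e W1 v) R' B' R') ?eq_refl //.
    move=> x hx; rewrite !inE; case: (x \in B') => //=.
    by have /andP[/negbTE -> _] := n _ _ hv hx; rewrite andbF.
have helpR : forall (W1 W2 B R : {set T}) v, disj W1 W2 -> noedge W1 W2 ->
    #|W1 :|: W2| <= k.+1 -> v \in W1 ->
    ropt e (W1 :|: W2) B R v ==G ropt e W1 B R v +G snort e W2 B R.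
  move=> W1 W2 B' R' v d n hk' hv; rewrite !ropt_lopt.
  apply: eq_trans (neg_eq (help W1 W2 R' B' v d n hk' hv)) _.
  by rewrite neg_add (snort_swap e W2 B' R') negK eq_refl.
have hk2 : #|V2 :|: V1| <= k.+1 by rewrite setUC.
apply: eq_opts; split.
- move=> x /In_snortL [v /andP[hv hvR] ->]; move: hv; rewrite inE => /orP[hv|hv].
  + exists (lopt e V1 B R v +G snort e V2 B R); last exact: help.
    by apply: In_addL1; apply/In_snortL; exists v; rewrite ?hv ?hvR.
  + exists (snort e V1 B R +G lopt e V2 B R v); last first.
      apply: eq_trans (add_comm _ _); rewrite setUC.
      exact: help (disjC hd) (noedgeC hn) hk2 hv.
    by apply: In_addL2; apply/In_snortL; exists v; rewrite ?hv ?hvR.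
- move=> y /In_addL [[z /In_snortL [v /andP[hv hvR] ->] ->]|[z /In_snortL [v /andP[hv hvR] ->] ->]].
  + exists (lopt e (V1 :|: V2) B R v); last exact: help.
    by apply/In_snortL; exists v; rewrite ?inE ?hv ?hvR.
  + exists (lopt e (V1 :|: V2) B R v); last first.
      apply: eq_trans (add_comm _ _); rewrite setUC.
      exact: help (disjC hd) (noedgeC hn) hk2 hv.
    by apply/In_snortL; exists v; rewrite ?inE ?hv ?hvR ?orbT.
- move=> x /In_snortR [v /andP[hv hvR] ->]; move: hv; rewrite inE => /orP[hv|hv].
  + exists (ropt e V1 B R v +G snort e V2 B R); last exact: helpR.
    by apply: In_addR1; apply/In_snortR; exists v; rewrite ?hv ?hvR.
  + exists (snort e V1 B R +G ropt e V2 B R v); last first.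
      apply: eq_trans (add_comm _ _); rewrite setUC.
      exact: helpR (disjC hd) (noedgeC hn) hk2 hv.
    by apply: In_addR2; apply/In_snortR; exists v; rewrite ?hv ?hvR.
- move=> y /In_addR [[z /In_snortR [v /andP[hv hvR] ->] ->]|[z /In_snortR [v /andP[hv hvR] ->] ->]].
  + exists (ropt e (V1 :|: V2) B R v); last exact: helpR.
    by apply/In_snortR; exists v; rewrite ?inE ?hv ?hvR.
  + exists (ropt e (V1 :|: V2) B R v); last first.
      apply: eq_trans (add_comm _ _); rewrite setUC.
      exact: helpR (disjC hd) (noedgeC hn) hk2 hv.
    by apply/In_snortR; exists v; rewrite ?inE ?hv ?hvR ?orbT.
Qed.

Lemma snort_split (V1 V2 B R : {set T}) : disj V1 V2 -> noedge V1 V2 ->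
  snort e (V1 :|: V2) B R ==G snort e V1 B R +G snort e V2 B R.
Proof. exact: snort_split_aux. Qed.

End Split.

Section Iso.
Variables (T : finType) (e : rel T).

Lemma snort0 (B R : {set T}) : snort e set0 B R = game0.
Proof. by rewrite snortE enum_set0. Qed.

Lemma lpos1 (B R : {set T}) v : lpos e [set v] B R v = set0.
Proof. by apply/setP => x; rewrite !inE; case: (x == v); rewrite ?andbF. Qed.

Lemma snort1 (B R : {set T}) v :
  snort e [set v] B R =
  Game (if v \in R then [::] else [:: game0]) (if v \in B then [::] else [:: game0]).
Proof.
rewrite snortE enum_set1 /=.
by case: (v \in R); case: (v \in B); rewrite /= /lopt /ropt ?lpos1 ?snort0.
Qed.

Definition indep (V : {set T}) := forall x y, x \in V -> y \in V -> ~~ e x y.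

Lemma cnt (V X : {set T}) v : v \in V -> #|V :&: X| = (v \in X) + #|(V :\ v) :&: X|.
Proof.
move=> hv; rewrite (cardsD1 v (V :&: X)) inE hv /=; congr (_ + _).
apply: eq_card => x; rewrite !inE.
by case: (x == v); case: (x \in V); case: (x \in X).
Qed.

Lemma snort_iso (V B R : {set T}) : indep V -> (forall x, x \in V -> ~~ ((x \in B) && (x \in R))) ->
  snort e V B R ==G gval #|V :&: B| #|V :&: R| #|V :&: ~: (B :|: R)|.
Proof.
move: {2}#|V| (leqnn #|V|) => k; elim: k V => [|k IH] V hk hi hBR.
  move: hk; rewrite leqn0 => /eqP/cards0_eq ->; rewrite snort0 !set0I !cards0.
  exact: eq_refl.
case: (eqVneq V set0) => [->|/set0Pn [v hv]]; first by rewrite snort0 !set0I !cards0; exact: eq_refl.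
have hV : V = [set v] :|: (V :\ v) by rewrite setD1K.
have hd : disj [set v] (V :\ v) by move=> x; rewrite !inE => /eqP ->; rewrite eqxx.
have hn : noedge e [set v] (V :\ v).
  move=> x y; rewrite !inE => /eqP -> /andP[_ hy]; by rewrite !hi.
rewrite hV; apply: eq_trans (snort_split B R hd hn) _; rewrite -hV.
have IH' := IH (V :\ v).
have := hBR v hv; rewrite (cnt B hv) (cnt R hv) (cnt (~: (B :|: R)) hv) !inE.
rewrite snort1.
have hk' : #|V :\ v| <= k by have := cardsD1 v V; rewrite hv; lia.
have hi' : indep (V :\ v) by move=> x y; rewrite !inE => /andP[_ ?] /andP[_ ?]; apply: hi.
have hBR' : forall x, x \in V :\ v -> ~~ ((x \in B) && (x \in R)).
  by move=> x; rewrite !inE => /andP[_ ?]; apply: hBR.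
have {}IH' := IH' hk' hi' hBR'.
case hB: (v \in B); case hR: (v \in R) => // _.
- apply: eq_trans (add_eq_r _ IH') _; exact: val1.
- apply: eq_trans (add_eq_r _ IH') _; exact: valm1.
- apply: eq_trans (add_eq_r _ IH') _; exact: valstar.
Qed.

End Iso.

Lemma val_a00 a : gval a 0 0 = game_nat a.
Proof. by rewrite /gval; have -> : game_neg (game_nat 0) +G starp 0 = game0 by []; rewrite add0. Qed.

Lemma val_00c c : gval 0 0 c = starp c.
Proof. by rewrite /gval; have -> : game_neg (game_nat 0) = game0 by []; rewrite !add0l. Qed.

Lemma starp_le_nat c a : 0 < a -> starp c <=G game_nat a.
Proof. case: a => // a _; rewrite /starp; case: (odd c); [exact: star_le_nat | exact: zero_le_nat]. Qed.

Section Star.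
Variables (T : finType) (e : rel T).

Lemma snort_star k : forall (z : T) (L B R : {set T}),
  #|L| = k.+1 -> z \notin L -> ~~ e z z -> z \in B -> z \notin R ->
  (forall l, l \in L -> [&& e z l, e l z, l \notin B & l \notin R]) -> indep e L ->
  snort e (z |: L) B R <=G game_nat k.+1 +G game_star.
Proof.
elim/ltn_ind: k => k IH z L B R hc hz hzz hzB hzR hL hi.
have hNl : forall v, v \in L -> nbhd e (z |: L) v = [set z].
  move=> v hv; apply/setP => u; rewrite !inE; case: (eqVneq u z) => [->|huz] /=.
    by case/and4P: (hL v hv).
  by case hu: (u \in L) => //=; rewrite (negbTE (hi _ _ hv hu)).
have hzv : forall v, v \in L -> z != v by move=> v hv; apply/eqP => E; move: hz; rewrite E hv.
apply: leI => x.
- move/In_snortL => [v /andP[hv hvR] ->]; move: hv; rewrite !inE => /orP[/eqP ->|hv].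
  + have hN : nbhd e (z |: L) z = L.
      apply/setP => u; rewrite !inE; case: (eqVneq u z) => [->|huz] /=.
        by rewrite (negbTE hzz) (negbTE hz).
      by case hu: (u \in L) => //=; case/and4P: (hL u hu).
    have hP : lpos e (z |: L) B R z = L.
      apply/setP => u; rewrite /lpos hN !inE; case hu: (u \in L).
        case/and4P: (hL u hu) => _ _ _ /negbTE ->; rewrite orbT andbT /=.
        by rewrite eqtype.eq_sym hzv.
      by rewrite orbF; case: (u == z); rewrite /= ?andbF.
    rewrite /lopt hP hN.
    have E1 : L :&: (B :|: L) = L.
      by apply/setP => u; rewrite !inE; case: (u \in L); rewrite ?orbT.
    have E2 : L :&: R = set0.
      apply/setP => u; rewrite !inE; case hu: (u \in L) => //=.
      by case/and4P: (hL u hu) => _ _ _ /negbTE ->.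
    have E3 : L :&: ~: ((B :|: L) :|: R) = set0.
      by apply/setP => u; rewrite !inE; case: (u \in L); rewrite ?orbT ?andbF.
    have hX := @snort_iso T e L (B :|: L) R hi.
    rewrite E1 E2 E3 cards0 hc val_a00 in hX.
    have {}hX : snort e L (B :|: L) R ==G game_nat k.+1.
      apply: hX => u hu; rewrite !inE.
      by case/and4P: (hL u hu) => _ _ _ /negbTE ->; rewrite andbF.
    apply/negP => H; have := le_trans H (eq_le hX).
    by rewrite (negbTE (not_natstar_le_nat _)).
  + have hP : lpos e (z |: L) B R v = z |: (L :\ v).
      apply/setP => u; rewrite /lpos (hNl v hv) !inE.
      case: (eqVneq u z) => [->|huz] /=; last by [].
      by rewrite hzR hzv.
    rewrite /lopt hP (hNl v hv).
    have hc' : #|L :\ v| = k by have := cardsD1 v L; rewrite hv hc; lia.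
    case: k IH hc hc' => [|k] IH hc hc'.
    * move/cards0_eq: hc' => ->; rewrite setU0 snort1 (negbTE hzR) !inE eqxx orbT.
      exact: not_natstar_le_nat 1.
    * have H1 : snort e (z |: L :\ v) (B :|: [set z]) R <=G game_nat k.+1 +G game_star.
        apply: IH => //.
        - by rewrite !inE (negbTE hz) andbF.
        - by rewrite !inE eqxx orbT.
        - move=> l; rewrite !inE => /andP[_ hl]; case/and4P: (hL l hl) => -> -> /negbTE -> -> /=.
          by rewrite eqtype.eq_sym hzv.
        - by move=> a b; rewrite !inE => /andP[_ ha] /andP[_ hb]; apply: hi.
      apply/negP => H; have := le_trans H H1; apply/negP; apply: lfL.
      by apply: In_addL1; left.
- move/In_addR => [[y]|[y [<-|//] ->]]; first by rewrite natR.
  rewrite add0.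
  have : L != set0 by rewrite -card_gt0 hc.
  case/set0Pn => l hl.
  have hP : lpos e (z |: L) R B l = L :\ l.
    apply/setP => u; rewrite /lpos (hNl l hl) !inE.
    case: (eqVneq u z) => [->|huz] /=; last by [].
    by rewrite hzB (negbTE hz) andbF.
  have hY : In (ropt e (z |: L) B R l) (rightopts (snort e (z |: L) B R)).
    apply/In_snortR; exists l => //; rewrite !inE hl orbT /=.
    by case/and4P: (hL l hl).
  suff hR : ropt e (z |: L) B R l <=G game_nat k.+1.
    by apply/negP => H; have := leR H hY; rewrite hR.
  apply: le_trans (starp_le_nat k (ltn0Sn k)).
  rewrite /ropt hP (hNl l hl) -val_00c.
  have hX := @snort_iso T e (L :\ l) B (R :|: [set z]).
  suff E1 : (L :\ l) :&: B = set0.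
   suff E2 : (L :\ l) :&: (R :|: [set z]) = set0.
    suff E3 : (L :\ l) :&: ~: (B :|: (R :|: [set z])) = L :\ l.
      have hc' : #|L :\ l| = k by have := cardsD1 l L; rewrite hl hc; lia.
      move: hX; rewrite E1 E2 E3 hc' !cards0 => hX; apply: eq_le; apply: hX.
      + by move=> a b; rewrite !inE => /andP[_ ha] /andP[_ hb]; apply: hi.
      + move=> u; rewrite !inE => /andP[_ hu].
        by case/and4P: (hL u hu) => _ _ /negbTE ->.
    apply/setP => u; rewrite !inE; case hu: (u \in L); rewrite ?andbF ?andbT //.
    case/and4P: (hL u hu) => _ _ /negbTE -> /negbTE ->.
    by rewrite /= [u == z]eqtype.eq_sym (negbTE (hzv _ hu)) andbT.
   apply/setP => u; rewrite !inE; case hu: (u \in L); rewrite ?andbF //.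
   case/and4P: (hL u hu) => _ _ _ /negbTE ->.
   by rewrite /= [u == z]eqtype.eq_sym (negbTE (hzv _ hu)) andbF.
  apply/setP => u; rewrite !inE; case hu: (u \in L); rewrite ?andbF //.
  by case/and4P: (hL u hu) => _ _ /negbTE ->; rewrite andbF.
Qed.
End Star.

Section Two.
Variable n : nat.
Hypothesis hn : 0 < n.
Local Notation T := (bool * 'I_n.+1)%type.
Local Notation e := (two_stars_edge n).

Definition leaves (b : bool) : {set T} := [set x : T | (x.1 == b) && (val x.2 != 0)].
Definition B0 (c : bool) : {set T} := [set (c, ord0)].
Definition R0 (c : bool) : {set T} := [set (~~ c, ord0)].

Lemma eq_ord0 (i : 'I_n.+1) : (i == ord0) = (val i == 0). Proof. by []. Qed.

Lemma vE (i : 'I_n.+1) : \val i = nat_of_ord i. Proof. by []. Qed.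

Lemma card_leaves b : #|leaves b| = n.
Proof.
have -> : leaves b = setX [set b] [set~ ord0].
  by apply/setP => -[b' i]; rewrite !inE.
by rewrite cardsX cards1 cardsC1 card_ord mul1n.
Qed.

Lemma indep_leaves (V : {set T}) : (forall x, x \in V -> val x.2 != 0) -> indep e V.
Proof.
move=> h [b i] [b' i'] /h /= hi /h /= hi'.
by rewrite /two_stars_edge /= (negbTE hi) (negbTE hi') !andbF.
Qed.

Lemma optA c : lopt e setT (B0 c) (R0 c) (c, ord0) ==G H0 n.
Proof.
have hN : nbhd e setT (c, ord0) = leaves c :|: R0 c.
  apply/setP => -[b i]; rewrite !inE /two_stars_edge /= ?xpair_eqE ?eq_ord0 ?vE.
  by clear -c b i; case: b; case: c => //=; case: (nat_of_ord i == 0).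
have hP : lpos e setT (B0 c) (R0 c) (c, ord0) = leaves c :|: leaves (~~ c).
  apply/setP => -[b i]; rewrite /lpos hN !inE /= ?xpair_eqE ?eq_ord0 ?vE.
  by clear -c b i; case: b; case: c => //=; case: (nat_of_ord i == 0).
rewrite /lopt hP hN.
have := @snort_iso T e (leaves c :|: leaves (~~ c)) (B0 c :|: (leaves c :|: R0 c)) (R0 c).
have -> : (leaves c :|: leaves (~~ c)) :&: (B0 c :|: (leaves c :|: R0 c)) = leaves c.
  apply/setP => -[b i]; rewrite !inE /= ?xpair_eqE ?eq_ord0 ?vE.
  by clear -c b i; case: b; case: c => //=; case: (nat_of_ord i == 0).
have -> : (leaves c :|: leaves (~~ c)) :&: R0 c = set0.
  apply/setP => -[b i]; rewrite !inE /= ?xpair_eqE ?eq_ord0 ?vE.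
  by clear -c b i; case: b; case: c => //=; case: (nat_of_ord i == 0).
have -> : (leaves c :|: leaves (~~ c)) :&: ~: ((B0 c :|: (leaves c :|: R0 c)) :|: R0 c) = leaves (~~ c).
  apply/setP => -[b i]; rewrite !inE /= ?xpair_eqE ?eq_ord0 ?vE.
  by clear -c b i; case: b; case: c => //=; case: (nat_of_ord i == 0).
rewrite !card_leaves cards0 valH0; apply.
- by apply: indep_leaves => x; rewrite !inE => /orP[] /andP[].
- move=> [b i]; rewrite !inE /= ?xpair_eqE ?eq_ord0 ?vE.
  by clear -c b i; case: b; case: c => //=; case: (nat_of_ord i == 0).
Qed.

Ltac vcase c b i' i hi :=
  let hz := fresh "hz" in let E := fresh "E" in
  clear - c b i' i hi; case: b; case: c => //=; case hz: (nat_of_ord i' == 0) => //=;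
  rewrite ?(negbTE hi) ?andbT ?andbF ?orbT ?orbF //=;
  try (case: eqP => [E|_] //=; move: hz hi; rewrite E => -> //).

Lemma optB c (i : 'I_n.+1) : nat_of_ord i != 0 ->
  exists2 Y, In Y (rightopts (lopt e setT (B0 c) (R0 c) (c, i))) & Y <=G game_pm (H0 n).
Proof.
move=> hi.
have hN : nbhd e setT (c, i) = B0 c.
  apply/setP => -[b i']; rewrite !inE /two_stars_edge /= ?xpair_eqE ?eq_ord0 ?vE.
  by vcase c b i' i hi.
have hP : lpos e setT (B0 c) (R0 c) (c, i) = setT :\ (c, i).
  apply/setP => -[b i']; rewrite /lpos hN !inE /= ?xpair_eqE ?eq_ord0 ?vE.
  by vcase c b i' i hi.
rewrite /lopt hP hN; set w : T := (~~ c, ord0).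
exists (ropt e (setT :\ (c, i)) (B0 c :|: B0 c) (R0 c) w).
  apply/In_snortR; exists w => //; rewrite !inE /w /= ?xpair_eqE ?eq_ord0 ?vE.
  by clear; case: c.
have hNw : nbhd e (setT :\ (c, i)) w = leaves (~~ c) :|: B0 c.
  apply/setP => -[b i']; rewrite !inE /two_stars_edge /= ?xpair_eqE ?eq_ord0 ?vE.
  by vcase c b i' i hi.
have hPw : lpos e (setT :\ (c, i)) (R0 c) (B0 c :|: B0 c) w = (leaves c :\ (c, i)) :|: leaves (~~ c).
  apply/setP => -[b i']; rewrite /lpos hNw !inE /= ?xpair_eqE ?eq_ord0 ?vE.
  by vcase c b i' i hi.
rewrite /ropt hPw hNw.
have := @snort_iso T e ((leaves c :\ (c, i)) :|: leaves (~~ c)) (B0 c :|: B0 c) (R0 c :|: (leaves (~~ c) :|: B0 c)).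
have -> : ((leaves c :\ (c, i)) :|: leaves (~~ c)) :&: (B0 c :|: B0 c) = set0.
  apply/setP => -[b i']; rewrite !inE /= ?xpair_eqE ?eq_ord0 ?vE.
  by vcase c b i' i hi.
have -> : ((leaves c :\ (c, i)) :|: leaves (~~ c)) :&: (R0 c :|: (leaves (~~ c) :|: B0 c)) = leaves (~~ c).
  apply/setP => -[b i']; rewrite !inE /= ?xpair_eqE ?eq_ord0 ?vE.
  by vcase c b i' i hi.
have -> : ((leaves c :\ (c, i)) :|: leaves (~~ c)) :&: ~: ((B0 c :|: B0 c) :|: (R0 c :|: (leaves (~~ c) :|: B0 c))) = leaves c :\ (c, i).
  apply/setP => -[b i']; rewrite !inE /= ?xpair_eqE ?eq_ord0 ?vE.
  by vcase c b i' i hi.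
have hc : #|leaves c :\ (c, i)| = n.-1.
  have := cardsD1 (c, i) (leaves c); rewrite card_leaves !inE eqxx hi /= => E; rewrite [in RHS]E add1n /=; reflexivity.
rewrite hc card_leaves cards0 => H; apply: le_trans (eq_le (H _ _)) (valB hn).
- apply: indep_leaves => x; rewrite !inE => /orP[/andP[_ /andP[]]|/andP[]] //.
- move=> [b i']; rewrite !inE /= ?xpair_eqE ?eq_ord0 ?vE.
  by vcase c b i' i hi.
Qed.

Lemma comb_le : (game_nat n +G game_star) +G starp n.-1 <=G H0 n.
Proof.
have ho : odd n.-1 = ~~ odd n by case: (n) hn => // m _ /=; rewrite negbK.
rewrite /H0 /starp ho; case: (odd n); rewrite [~~ _]/=.
- by rewrite add0 le_refl.
- apply: le_trans (eq_le (add_assoc _ _ _)) _.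
  apply: le_trans (add_le_r _ (eq_le star_star)) _.
  by rewrite add0 le_refl.
Qed.

Lemma optC c (j : 'I_n.+1) : nat_of_ord j != 0 ->
  lopt e setT (B0 c) (R0 c) (~~ c, j) <=G H0 n.
Proof.
move=> hi.
have hN : nbhd e setT (~~ c, j) = R0 c.
  apply/setP => -[b i']; rewrite !inE /two_stars_edge /= ?xpair_eqE ?eq_ord0 ?vE.
  by vcase c b i' j hi.
have hP : lpos e setT (B0 c) (R0 c) (~~ c, j) =
    ((c, ord0) |: leaves c) :|: (leaves (~~ c) :\ (~~ c, j)).
  apply/setP => -[b i']; rewrite /lpos hN !inE /= ?xpair_eqE ?eq_ord0 ?vE.
  by vcase c b i' j hi.
rewrite /lopt hP hN.
have hd : disj ((c, ord0) |: leaves c) (leaves (~~ c) :\ (~~ c, j)).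
  move=> [b i']; rewrite !inE /= ?xpair_eqE ?eq_ord0 ?vE.
  by clear; case: b; case: c.
have hne : noedge e ((c, ord0) |: leaves c) (leaves (~~ c) :\ (~~ c, j)).
  move=> [b i'] [b2 i2]; rewrite !inE /two_stars_edge /= ?xpair_eqE ?eq_ord0 ?vE.
  move=> hx /andP[_ /andP[hb2 hi2]]; rewrite (negbTE hi2) !andbF.
  by clear -hx hb2; case: b hx; case: b2 hb2; case: c.
apply: le_trans (eq_le (snort_split (B0 c :|: R0 c) (R0 c) hd hne)) _.
have hS : snort e ((c, ord0) |: leaves c) (B0 c :|: R0 c) (R0 c) <=G game_nat n +G game_star.
  have := @snort_star T e n.-1 (c, ord0) (leaves c) (B0 c :|: R0 c) (R0 c).
  rewrite prednK //; apply.
  - exact: card_leaves.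
  - by rewrite !inE /= eqxx.
  - by rewrite /two_stars_edge /= eqxx.
  - by rewrite !inE eqxx.
  - by rewrite !inE /= ?xpair_eqE; clear; case: c.
  - move=> [b i']; rewrite !inE /two_stars_edge /= ?xpair_eqE ?eq_ord0 ?vE.
    by clear; case/andP=> /eqP -> /negbTE ->; case: c.
  - by apply: indep_leaves => x; rewrite !inE => /andP[].
have hI : snort e (leaves (~~ c) :\ (~~ c, j)) (B0 c :|: R0 c) (R0 c) ==G starp n.-1.
  have := @snort_iso T e (leaves (~~ c) :\ (~~ c, j)) (B0 c :|: R0 c) (R0 c).
  have -> : (leaves (~~ c) :\ (~~ c, j)) :&: (B0 c :|: R0 c) = set0.
    apply/setP => -[b i']; rewrite !inE /= ?xpair_eqE ?eq_ord0 ?vE.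
    by vcase c b i' j hi.
  have -> : (leaves (~~ c) :\ (~~ c, j)) :&: R0 c = set0.
    apply/setP => -[b i']; rewrite !inE /= ?xpair_eqE ?eq_ord0 ?vE.
    by vcase c b i' j hi.
  have -> : (leaves (~~ c) :\ (~~ c, j)) :&: ~: ((B0 c :|: R0 c) :|: R0 c) = leaves (~~ c) :\ (~~ c, j).
    apply/setP => -[b i']; rewrite !inE /= ?xpair_eqE ?eq_ord0 ?vE.
    by vcase c b i' j hi.
  have hc : #|leaves (~~ c) :\ (~~ c, j)| = n.-1.
    have := cardsD1 (~~ c, j) (leaves (~~ c)); rewrite card_leaves !inE eqxx hi /=.
    by move=> E; rewrite [in RHS]E add1n /=; reflexivity.
  rewrite hc !cards0 val_00c; apply.
  - by apply: indep_leaves => x; rewrite !inE => /andP[_ /andP[]].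
  - move=> [b i']; rewrite !inE /= ?xpair_eqE ?eq_ord0 ?vE.
    by vcase c b i' j hi.
apply: le_trans (add_le_l _ hS) _.
apply: le_trans (add_le_r _ (eq_le hI)) _.
exact: comb_le.
Qed.

Lemma leftG1 c X : In X (leftopts (snort e setT (B0 c) (R0 c))) ->
  ~~ (game_pm (H0 n) <=G X).
Proof.
move/In_snortL => [[b i] /andP[_ hvR] ->].
have hb : b = c \/ b = ~~ c by clear; case: b; case: c; auto.
have [hi|hi] := eqVneq (nat_of_ord i) 0.
- have -> : i = ord0 by apply: val_inj.
  case: hb => hb; subst b.
  + by apply: pm_notle; apply: eq_le (optA c).
  + by move: hvR; rewrite !inE /= ?xpair_eqE eqxx /= -[i == ord0]/(nat_of_ord i == 0) hi.
- case: hb => hb; subst b.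
  + have [Y hY hYle] := optB c hi.
    by apply/negP => H; have := leR H hY; rewrite hYle.
  + by apply: pm_notle; apply: optC.
Qed.

Lemma leftG2 c : exists2 Q, In Q (leftopts (snort e setT (B0 c) (R0 c))) & H0 n <=G Q.
Proof.
exists (lopt e setT (B0 c) (R0 c) (c, ord0)); last exact: eq_ge (optA c).
apply/In_snortL; exists (c, ord0) => //; rewrite !inE /= ?xpair_eqE.
by clear; case: c.
Qed.

End Two.

Lemma neg_pm g : game_neg (game_pm g) = game_pm g.
Proof. by rewrite /game_pm /= negK. Qed.

Theorem lemma5 (n : nat) (hn : 1 <= n) :
  game_eq (two_stars_value n)
    (if odd n then game_pm (game_add (game_nat n) game_star)
     else game_pm (game_nat n)).
Proof.
have -> : (if odd n then game_pm (game_add (game_nat n) game_star)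
     else game_pm (game_nat n)) = game_pm (H0 n) by rewrite /H0; case: (odd n).
have -> : two_stars_value n = snort (two_stars_edge n) setT (B0 n true) (R0 n true) by [].
set G := snort _ setT (B0 n true) (R0 n true).
have hGf : snort (two_stars_edge n) setT (B0 n false) (R0 n false) = game_neg G.
  exact: (snort_swap (two_stars_edge n) setT (B0 n true) (R0 n true)).
have hR : forall y, In y (rightopts G) <->
    exists2 x, In x (leftopts (snort (two_stars_edge n) setT (B0 n false) (R0 n false))) & y = game_neg x.
  move=> y; rewrite hGf -{1}(negK G) (negE (game_neg G)) /= In_map; split.
  - by case=> x hx ->; exists x.
  - by case=> x hx ->; exists x.
apply/andP; split; apply: leI.
- by move=> gl hgl; apply: (@leftG1 n hn true gl hgl).
- move=> hr [<-|//]; have [Q hQ hQle] := @leftG2 n false.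
  have hY : In (game_neg Q) (rightopts G) by apply/hR; exists Q.
  apply/negP => H; have := leR H hY; by rewrite neg_le hQle.
- move=> gl [<-|//]; have [Q hQ hQle] := @leftG2 n true.
  apply/negP => H; have := lfL hQ; by rewrite (le_trans H hQle).
- move=> hr /hR [x hx ->]; rewrite -{1}(neg_pm (H0 n)) neg_le.
  exact: (@leftG1 n hn false x hx).
Qed.
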